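(* Let $\mathbf{L}\in\{\mathbf{K}_D,\mathbf{KD}_D,\mathbf{KT}_D\}$. If $\mathsf{G}(\mathbf{L})\vdash\Gamma\Rightarrow\Delta$, then $\mathsf{H}(\mathbf{L})\vdash\Gamma_\star\rightarrow\Delta^\star$, where $\Gamma_\star$ is the conjunction of all formulas in $\Gamma$ ($\top$ if $\Gamma$ is empty) and $\Delta^\star$ is the disjunction of all formulas in $\Delta$ ($\bot$ if $\Delta$ is empty).
   Context: Language: fix a finite nonempty set $\mathsf{Agt}$ of agents and a countable set $\mathsf{Prop}$ of propositional variables; $\mathsf{Grp}$ is the set of nonempty subsets of $\mathsf{Agt}$. Formulas: $\alpha::=p\mid\bot\mid\alpha\wedge\alpha\mid\alpha\vee\alpha\mid\alpha\rightarrow\alpha\mid\neg\alpha\mid D_G\alpha$ ($p\in\mathsf{Prop}$, $G\in\mathsf{Grp}$). Outmost-boxed formula: one of the form $D_G\gamma$. Hilbert systems: $\mathsf{H}(\mathbf{K}_D)$ has all instances of propositional tautologies, $D_G(\alpha\rightarrow\beta)\rightarrow(D_G\alpha\rightarrow D_G\beta)$, $D_G\alpha\rightarrow D_H\alpha$ for $G\subseteq H$, modus ponens, and necessitation (from $\alpha$ infer $D_G\alpha$). $\mathsf{H}(\mathbf{KD}_D)$ adds $\neg D_{\{a\}}\bot$ for each $a\in\mathsf{Agt}$; $\mathsf{H}(\mathbf{KT}_D)$ adds $D_G\alpha\rightarrow\alpha$. Sequent calculi (sequents $\Gamma\Rightarrow\Delta$ are pairs of finite multisets; derivable = root of a finite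 tree built from initial sequents by rules): $\mathsf{G}(\mathbf{K}_D)$ has initial sequents $\Gamma,p\Rightarrow p,\Delta$ and $\bot,\Gamma\Rightarrow\Delta$; rules $(R\wedge)$ from $\Gamma\Rightarrow\Delta,\alpha_1$ and $\Gamma\Rightarrow\Delta,\alpha_2$ infer $\Gamma\Rightarrow\Delta,\alpha_1\wedge\alpha_2$; $(L\wedge)$ from $\alpha_1,\alpha_2,\Gamma\Rightarrow\Delta$ infer $\alpha_1\wedge\alpha_2,\Gamma\Rightarrow\Delta$; $(R\vee)$ from $\Gamma\Rightarrow\Delta,\alpha_1,\alpha_2$ infer $\Gamma\Rightarrow\Delta,\alpha_1\vee\alpha_2$; $(L\vee)$ from $\alpha_1,\Gamma\Rightarrow\Delta$ and $\alpha_2,\Gamma\Rightarrow\Delta$ infer $\alpha_1\vee\alpha_2,\Gamma\Rightarrow\Delta$; $(R\rightarrow)$ from $\alpha_1,\Gamma\Rightarrow\Delta,\alpha_2$ infer $\Gamma\Rightarrow\Delta,\alpha_1\rightarrow\alpha_2$; $(L\rightarrow)$ from $\Gamma\Rightarrow\Delta,\alpha_1$ and $\alpha_2,\Gamma\Rightarrow\Delta$ infer $\alpha_1\rightarrow\alpha_2,\Gamma\Rightarrow\Delta$; $(R\neg)$ from $\alpha,\Gamma\Rightarrow\Delta$ infer $\Gamma\Rightarrow\Delta,\neg\alpha$; $(L\neg)$ from $\Gamma\Rightarrow\Delta,\alpha$ infer $\neg\alpha,\Gamma\Rightarrow\Delta$; $(D_K)$: from $\alpha_1,\dots,\alpha_n\Rightarrow\beta$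 ($n\ge0$) infer $\Sigma,D_{G_1}\alpha_1,\dots,D_{G_n}\alpha_n\Rightarrow D_G\beta,\Omega$ where all $G_i\subseteq G$, $\Sigma$ consists only of propositional variables, $\bot$, and $D_H\gamma$ with $H\not\subseteq G$, and $\Omega$ only of propositional variables, $\bot$, outmost-boxed formulas. $\mathsf{G}(\mathbf{KD}_D)$ adds $(D_D)$: from $\Gamma\Rightarrow$ with $\Gamma\neq\emptyset$ infer $\Sigma,D_{\{a\}}\Gamma\Rightarrow\Omega$, $\Sigma$ only propositional variables, $\bot$, $D_H\gamma$ with $H\neq\{a\}$; $\Omega$ only propositional variables, $\bot$, outmost-boxed formulas. $\mathsf{G}(\mathbf{KT}_D)$ adds to $\mathsf{G}(\mathbf{K}_D)$ $(D_T)$: from $D_G\alpha,\alpha,\Gamma\Rightarrow\Delta$ infer $D_G\alpha,\Gamma\Rightarrow\Delta$. *)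

(* Defs.v *)
From mathcomp Require Import all_boot.
From Stdlib Require Import Permutation.
Set Implicit Arguments. Unset Strict Implicit. Unset Printing Implicit Defensive.

Section Syntax.
Variable A : finType. (* the finite set Agt of agents *)

Definition grp := {G : {set A} | G != set0}.

Inductive form : Type :=
| Var of nat
| Bot
| And of form & form
| Or of form & form
| Imp of form & form
| Neg of form
| Box of grp & form.

Definition Top : form := Imp Bot Bot.

Lemma set1_nonempty (a : A) : [set a] != set0.
Proof. by apply/set0Pn; exists a; rewrite in_set1. Qed.

Definition gsing (a : A) : grp := exist _ [set a] (set1_nonempty a).

Fixpoint peval (v : form -> bool) (f : form) : bool :=
  match f with
  | Var p => v (Var p)
  | Bot => false
  | And f1 f2 => peval v f1 && peval v f2
  | Or f1 f2 => peval v f1 || peval v f2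
  | Imp f1 f2 => peval v f1 ==> peval v f2
  | Neg f1 => ~~ peval v f1
  | Box G g => v (Box G g)
  end.

Definition taut_instance (f : form) : Prop := forall v : form -> bool, peval v f.

Inductive logic := LK | LKD | LKT.

Inductive Hprov (L : logic) : form -> Prop :=
| H_taut a : taut_instance a -> Hprov L a
| H_K (G : grp) a b :
    Hprov L (Imp (Box G (Imp a b)) (Imp (Box G a) (Box G b)))
| H_mono (G H : grp) a : val G \subset val H ->
    Hprov L (Imp (Box G a) (Box H a))
| H_D (a : A) : L = LKD -> Hprov L (Neg (Box (gsing a) Bot))
| H_T (G : grp) a : L = LKT -> Hprov L (Imp (Box G a) a)
| H_MP a b : Hprov L (Imp a b) -> Hprov L a -> Hprov L b
| H_Nec (G : grp) a : Hprov L a -> Hprov L (Box G a).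

Definition omega_ok (f : form) : Prop :=
  match f with Var _ | Bot | Box _ _ => True | _ => False end.

Definition sigmaK_ok (G : grp) (f : form) : Prop :=
  match f with Var _ | Bot => True | Box H _ => ~ (val H \subset val G) | _ => False end.

Definition sigmaD_ok (a : A) (f : form) : Prop :=
  match f with Var _ | Bot => True | Box H _ => val H <> [set a] | _ => False end.

(* Sequent calculi G(K_D), G(KD_D), G(KT_D).  Sequents are pairs of finite
   multisets, represented as lists taken up to permutation (rule G_perm). *)
Inductive Gprov (L : logic) : seq form -> seq form -> Prop :=
| G_perm Г Δ Г' Δ' : Permutation Г Г' -> Permutation Δ Δ' ->
    Gprov L Г Δ -> Gprov L Г' Δ'
| G_init Г Δ p : Gprov L (Var p :: Г) (Var p :: Δ)
| G_bot Г Δ : Gprov L (Bot :: Г) Δ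
| G_Rand Г Δ a1 a2 : Gprov L Г (a1 :: Δ) -> Gprov L Г (a2 :: Δ) ->
    Gprov L Г (And a1 a2 :: Δ)
| G_Land Г Δ a1 a2 : Gprov L (a1 :: a2 :: Г) Δ -> Gprov L (And a1 a2 :: Г) Δ
| G_Ror Г Δ a1 a2 : Gprov L Г (a1 :: a2 :: Δ) -> Gprov L Г (Or a1 a2 :: Δ)
| G_Lor Г Δ a1 a2 : Gprov L (a1 :: Г) Δ -> Gprov L (a2 :: Г) Δ ->
    Gprov L (Or a1 a2 :: Г) Δ
| G_Rimp Г Δ a1 a2 : Gprov L (a1 :: Г) (a2 :: Δ) -> Gprov L Г (Imp a1 a2 :: Δ)
| G_Limp Г Δ a1 a2 : Gprov L Г (a1 :: Δ) -> Gprov L (a2 :: Г) Δ ->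
    Gprov L (Imp a1 a2 :: Г) Δ
| G_Rneg Г Δ a : Gprov L (a :: Г) Δ -> Gprov L Г (Neg a :: Δ)
| G_Lneg Г Δ a : Gprov L Г (a :: Δ) -> Gprov L (Neg a :: Г) Δ
| G_DK (boxes : seq (grp * form)) (G : grp) b (Σ Ω : seq form) :
    (forall p, List.In p boxes -> val p.1 \subset val G) ->
    (forall f, List.In f Σ -> sigmaK_ok G f) ->
    (forall f, List.In f Ω -> omega_ok f) ->
    Gprov L (map snd boxes) [:: b] ->
    Gprov L (Σ ++ map (fun p => Box p.1 p.2) boxes) (Box G b :: Ω)
| G_DD (a : A) (Г Σ Ω : seq form) : L = LKD -> Г <> [::] ->
    (forall f, List.In f Σ -> sigmaD_ok a f) ->
    (forall f, List.In f Ω -> omega_ok f) ->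
    Gprov L Г [::] ->
    Gprov L (Σ ++ map (Box (gsing a)) Г) Ω
| G_DT (G : grp) a Г Δ : L = LKT ->
    Gprov L (Box G a :: a :: Г) Δ -> Gprov L (Box G a :: Г) Δ.

Fixpoint bigAnd (l : seq form) : form :=
  match l with
  | [::] => Top
  | [:: a] => a
  | a :: l' => And a (bigAnd l')
  end.

Fixpoint bigOr (l : seq form) : form :=
  match l with
  | [::] => Bot
  | [:: a] => a
  | a :: l' => Or a (bigOr l')
  end.

End Syntax.

Arguments Var {A}.
Arguments Bot {A}.

(* Main.v *)
Require Import Defs.
From mathcomp Require Import all_boot.
From Stdlib Require Import Permutation.
Set Implicit Arguments. Unset Strict Implicit. Unset Printing Implicit Defensive.

Section S.
Variable A : finType.
Variable L : logic.
Implicit Types (a b X Y : form A) (G : grp A).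

Lemma derive (ps : seq (form A)) q :
  (forall p, List.In p ps -> Hprov L p) ->
  (forall v, (forall p, List.In p ps -> peval v p) -> peval v q) -> Hprov L q.
Proof.
elim: ps q => [|p ps IH] q Hp Hs.
  by apply: H_taut => v; apply: Hs.
apply: (@H_MP _ _ p); last by apply: Hp; left.
apply: IH => [r Hr|v Hv /=]; first by apply: Hp; right.
apply/implyP => hp; apply: Hs => r [<-|Hr] //; exact: Hv.
Qed.

Lemma derive1 a q : Hprov L a -> (forall v, peval v a -> peval v q) -> Hprov L q.
Proof.
move=> ha H; apply: (@derive [:: a]) => [p [<-|[]]|v Hv] //.
by apply: H; apply: Hv; left.
Qed.

Lemma derive2 a b q : Hprov L a -> Hprov L b ->
  (forall v, peval v a -> peval v b -> peval v q) -> Hprov L q.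
Proof.
move=> ha hb H; apply: (@derive [:: a; b]) => [p [<-|[<-|[]]]|v Hv] //.
by apply: H; apply: Hv; [left|right;left].
Qed.

Lemma derive3 a b c q : Hprov L a -> Hprov L b -> Hprov L c ->
  (forall v, peval v a -> peval v b -> peval v c -> peval v q) -> Hprov L q.
Proof.
move=> ha hb hc H; apply: (@derive [:: a; b; c]) => [p [<-|[<-|[<-|[]]]]|v Hv] //.
by apply: H; apply: Hv; [left|right;left|right;right;left].
Qed.

Lemma derive4 a b c d q : Hprov L a -> Hprov L b -> Hprov L c -> Hprov L d ->
  (forall v, peval v a -> peval v b -> peval v c -> peval v d -> peval v q) -> Hprov L q.
Proof.
move=> ha hb hc hd H;
apply: (@derive [:: a; b; c; d]) => [p [<-|[<-|[<-|[<-|[]]]]]|v Hv] //.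
by apply: H; apply: Hv; [left|right;left|right;right;left|right;right;right;left].
Qed.

Lemma bigAndE v (l : seq (form A)) : peval v (bigAnd l) = all (peval v) l.
Proof.
elim: l => [|a l IH] //=; case: l IH => [|b l] IH /=; first by rewrite andbT.
by rewrite IH.
Qed.

Lemma bigOrE v (l : seq (form A)) : peval v (bigOr l) = has (peval v) l.
Proof.
elim: l => [|a l IH] //=; case: l IH => [|b l] IH /=; first by rewrite orbF.
by rewrite IH.
Qed.

Lemma perm_all (f : form A -> bool) l l' : Permutation l l' -> all f l = all f l'.
Proof.
elim => //= [x l1 l2 _ -> | x y l1 | l1 l2 l3 _ -> _ ->] //.
by rewrite andbCA.
Qed.

Lemma perm_has (f : form A -> bool) l l' : Permutation l l' -> has f l = has f l'.
Proof.
elim => //= [x l1 l2 _ -> | x y l1 | l1 l2 l3 _ -> _ ->] //.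
by rewrite orbCA.
Qed.

Lemma impl G X Y : (forall v, peval v X -> peval v Y) ->
  Hprov L (Imp (Box G X) (Box G Y)).
Proof.
move=> H; apply: (@H_MP _ _ (Box G (Imp X Y))); first exact: H_K.
by apply: H_Nec; apply: H_taut => v /=; apply/implyP; apply: H.
Qed.

Lemma box_conj G (boxes : seq (grp A * form A)) :
  (forall p, List.In p boxes -> val p.1 \subset val G) ->
  Hprov L (Imp (bigAnd (map (fun p => Box p.1 p.2) boxes))
               (Box G (bigAnd (map snd boxes)))).
Proof.
elim: boxes => [|p rest IH] Hsub.
  have h : Hprov L (Box G (Top A)) by apply: H_Nec; apply: H_taut.
  by apply: (derive1 h) => v /= ->.
set R := bigAnd (map snd rest).
have h1 : Hprov L (Imp (Box p.1 p.2) (Box G p.2)) by apply: H_mono; apply: Hsub; left.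
have h2 := IH (fun q Hq => Hsub q (or_intror Hq)).
have h3 : Hprov L (Imp (Box G p.2) (Box G (Imp R (And p.2 R)))).
  by apply: impl => v /= ->; apply/implyP.
have h4 := H_K L G R (And p.2 R).
have h5 : Hprov L (Imp (Box G (And p.2 R)) (Box G (bigAnd (p.2 :: map snd rest)))).
  by apply: impl => v; rewrite [peval v (bigAnd (_ :: _))]bigAndE /= -bigAndE.
apply: (@derive [:: Imp (Box p.1 p.2) (Box G p.2); Imp (bigAnd (map (fun p => Box p.1 p.2) rest)) (Box G R); Imp (Box G p.2) (Box G (Imp R (And p.2 R))); Imp (Box G (Imp R (And p.2 R))) (Imp (Box G R) (Box G (And p.2 R))); Imp (Box G (And p.2 R)) (Box G (bigAnd (p.2 :: map snd rest)))]) => [q [<-|[<-|[<-|[<-|[<-|[]]]]]]|v Hv] //.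
have /implyP e1 := Hv _ (or_introl erefl).
have e2 : peval v (bigAnd [seq Box q.1 q.2 | q <- rest]) -> peval v (Box G R) by apply/implyP; exact: (Hv _ (or_intror (or_introl erefl))).
have /implyP e3 := Hv _ (or_intror (or_intror (or_introl erefl))).
have /implyP e4 := Hv _ (or_intror (or_intror (or_intror (or_introl erefl)))).
have /implyP e5 := Hv _ (or_intror (or_intror (or_intror (or_intror (or_introl erefl))))).
change (peval v (bigAnd [seq Box p0.1 p0.2 | p0 <- p :: rest]) ==> v (Box G (bigAnd (p.2 :: map snd rest)))).
rewrite bigAndE /=; apply/implyP => /andP [b1 b2].
apply: e5; move/implyP: (e4 (e3 (e1 b1))); apply; apply: e2.
by rewrite bigAndE.
Qed.

Lemma seq1 (G1 D1 G2 D2 : seq (form A)) :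
  Hprov L (Imp (bigAnd G1) (bigOr D1)) ->
  (forall v, (all (peval v) G1 ==> has (peval v) D1) ->
     all (peval v) G2 ==> has (peval v) D2) ->
  Hprov L (Imp (bigAnd G2) (bigOr D2)).
Proof.
move=> h H; apply: (derive1 h) => v; rewrite /= !bigAndE !bigOrE; exact: H.
Qed.

Lemma seq2 (G1 D1 G1' D1' G2 D2 : seq (form A)) :
  Hprov L (Imp (bigAnd G1) (bigOr D1)) ->
  Hprov L (Imp (bigAnd G1') (bigOr D1')) ->
  (forall v, (all (peval v) G1 ==> has (peval v) D1) ->
     (all (peval v) G1' ==> has (peval v) D1') ->
     all (peval v) G2 ==> has (peval v) D2) ->
  Hprov L (Imp (bigAnd G2) (bigOr D2)).
Proof.
move=> h h' H; apply: (derive2 h h') => v; rewrite /= !bigAndE !bigOrE; exact: H.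
Qed.

Lemma seq0 (G2 D2 : seq (form A)) :
  (forall v, all (peval v) G2 ==> has (peval v) D2) ->
  Hprov L (Imp (bigAnd G2) (bigOr D2)).
Proof.
move=> H; apply: H_taut => v; rewrite /= bigAndE bigOrE; exact: H.
Qed.

End S.

Ltac bcase :=
  repeat match goal with
  | |- context[peval ?v ?a] => case: (peval v a)
  | |- context[all ?f ?l] => case: (all f l)
  | |- context[has ?f ?l] => case: (has f l)
  | |- context[?v (Var ?p)] => case: (v (Var p))
  | |- context[?v (Box ?G ?p)] => case: (v (Box G p))
  end; try done.

Lemma map_box_snd (A : finType) (a : grp A) (l : seq (form A)) :
  map snd (map (fun f => (a, f)) l) = l.
Proof. by elim: l => //= x l ->. Qed.

Lemma map_box_box (A : finType) (a : grp A) (l : seq (form A)) :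
  map (fun p => Box p.1 p.2) (map (fun f => (a, f)) l) = map (Box a) l.
Proof. by elim: l => //= x l ->. Qed.

Theorem proposition3p13 (A : finType) (HA : 0 < #|A|) (L : logic)
    (Г Δ : seq (form A)) :
  Gprov L Г Δ -> Hprov L (Imp (bigAnd Г) (bigOr Δ)).
Proof.
elim => {Г Δ}.
- move=> G D G' D' HG HD _ h; apply: (seq1 h) => v.
  by rewrite -(perm_all _ HG) -(perm_has _ HD).
- move=> G D p; apply: seq0 => v /=; bcase.
- move=> G D; apply: seq0 => v /=; bcase.
- move=> G D a1 a2 _ h1 _ h2; apply: (seq2 h1 h2) => v /=; bcase.
- move=> G D a1 a2 _ h1; apply: (seq1 h1) => v /=; bcase.
- move=> G D a1 a2 _ h1; apply: (seq1 h1) => v /=; bcase.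
- move=> G D a1 a2 _ h1 _ h2; apply: (seq2 h1 h2) => v /=; bcase.
- move=> G D a1 a2 _ h1; apply: (seq1 h1) => v /=; bcase.
- move=> G D a1 a2 _ h1 _ h2; apply: (seq2 h1 h2) => v /=; bcase.
- move=> G D a1 _ h1; apply: (seq1 h1) => v /=; bcase.
- move=> G D a1 _ h1; apply: (seq1 h1) => v /=; bcase.
- move=> boxes G b S O Hsub _ _ _ h.
  have F1 := box_conj L Hsub.
  have F2 : Hprov L (Imp (Box G (bigAnd (map snd boxes))) (Box G b)).
    exact: (H_MP (H_K _ _ _ _) (H_Nec _ h)).
  apply: (derive2 F1 F2) => v e1 e2.
  rewrite [peval v (Imp _ _)]/= bigAndE in e1.
  rewrite [peval v (Imp _ _)]/= in e2.
  change (peval v (bigAnd (S ++ map (fun p => Box p.1 p.2) boxes)) ==> peval v (bigOr (Box G b :: O))).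
  rewrite bigAndE bigOrE all_cat.
  apply/implyP => /andP [_ H].
  by rewrite /= (implyP e2 (implyP e1 H)).
- move=> a G S O HL _ _ _ _ h.
  have F2 : Hprov L (Imp (Box (gsing a) (bigAnd G)) (Box (gsing a) Bot)).
    exact: (H_MP (H_K _ _ _ _) (H_Nec _ h)).
  have Hs : forall p, List.In p (map (fun f => (gsing a, f)) G) ->
      val p.1 \subset val (gsing a).
    by move=> p /List.in_map_iff [f [<- _]]; exact: subxx.
  have F1 := box_conj L Hs.
  rewrite map_box_snd map_box_box in F1.
  apply: (derive3 F1 F2 (H_D a HL)) => v e1 e2 e3.
  change (is_true (peval v (bigAnd (map (Box (gsing a)) G)) ==> v (Box (gsing a) (bigAnd G)))) in e1.
  change (is_true (v (Box (gsing a) (bigAnd G)) ==> v (Box (gsing a) Bot))) in e2.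
  change (is_true (~~ v (Box (gsing a) Bot))) in e3.
  change (peval v (bigAnd (S ++ map (Box (gsing a)) G)) ==> peval v (bigOr O)).
  rewrite bigAndE all_cat; rewrite bigAndE in e1; apply/implyP => /andP [_ H].
  by move: e3; rewrite (implyP e2 (implyP e1 H)).
- move=> G a Г Δ HL _ h.
  apply: (derive2 h (H_T G a HL)) => v e1 e2.
  change (is_true (peval v (bigAnd (Box G a :: a :: Г)) ==> peval v (bigOr Δ))) in e1.
  change (is_true (v (Box G a) ==> peval v a)) in e2.
  change (peval v (bigAnd (Box G a :: Г)) ==> peval v (bigOr Δ)).
  rewrite !bigAndE /= in e1 *; move: e1 e2; bcase.
Qed.
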